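(* Let $F$ be any non-trivial finite group with trivial center (e.g. a non-abelian finite simple group). Then there exist an infinite compact Hausdorff space $X$ and two minimal free continuous actions $\widetilde{\alpha}$ and $\widetilde{\alpha}'$ of $\mathbb{Z}\times F$ on $X$ such that $\widetilde{\alpha}$ and $\widetilde{\alpha}'$ are continuously orbit equivalent but not conjugate.
   Context: Continuous orbit equivalence: two continuous actions $G\curvearrowright X$ and $K\curvearrowright Y$ on compact Hausdorff spaces are continuously orbit equivalent if there is a homeomorphism $\phi:X\to Y$ with inverse $\psi$ and continuous maps $a:G\times X\to K$, $b:K\times Y\to G$ such that $\phi(gx)=a(g,x)\phi(x)$ and $\psi(hy)=b(h,y)\psi(y)$ for all $g\in G$, $h\in K$, $x\in X$, $y\in Y$. Two actions $\alpha,\beta$ of the same group $G$ on $X$ are conjugate if there are a homeomorphism $\phi:X\to X$ and a group automorphism $\tau$ of $G$ with $\phi(\alpha_g x)=\beta_{\tau(g)}(\phi(x))$ for all $g\in G$, $x\in X$ (equivalently, the maps $a,b$ above can be taken to be group isomorphisms). *)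

(* Defs.v *)
From HB Require Import structures.
From mathcomp Require Import all_boot all_order all_algebra all_fingroup all_solvable.
From mathcomp Require Import all_classical all_reals all_analysis.
Set Implicit Arguments. Unset Strict Implicit. Unset Printing Implicit Defensive.
Import Order.TTheory GRing.Theory Num.Theory.

Definition ZF (gT : finGroupType) := (int * gT)%type.

Definition zf_one (gT : finGroupType) : ZF gT := (0%R, 1%g).
Definition zf_mul (gT : finGroupType) (a b : ZF gT) : ZF gT :=
  ((a.1 + b.1)%R, (a.2 * b.2)%g).

Local Open Scope classical_set_scope.

(* Group action of Z x F on X by continuous maps (Z x F is discrete, so
   continuity of the action is continuity of each map alpha g). *)
Definition cont_action (gT : finGroupType) (X : topologicalType)
  (alpha : ZF gT -> X -> X) : Prop :=
  [/\ forall x, alpha (zf_one gT) x = x,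
      forall g h x, alpha (zf_mul g h) x = alpha g (alpha h x)
    & forall g, continuous (alpha g)].

Definition orbit (gT : finGroupType) (X : Type) (alpha : ZF gT -> X -> X) (x : X)
  : set X := [set alpha g x | g in [set: ZF gT]].

Definition minimal_action (gT : finGroupType) (X : topologicalType)
  (alpha : ZF gT -> X -> X) : Prop :=
  forall x, closure (orbit alpha x) = [set: X].

Definition free_action (gT : finGroupType) (X : Type)
  (alpha : ZF gT -> X -> X) : Prop :=
  forall g x, alpha g x = x -> g = zf_one gT.

(* A map X -> D into a discrete space D is continuous iff it is locally constant. *)
Definition loc_const (X : topologicalType) (D : Type) (f : X -> D) : Prop :=
  forall x, \forall y \near x, f y = f x.

(* continuous map G x X -> G, G discrete *)
Definition cocycle_cont (gT : finGroupType) (X : topologicalType)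
  (a : ZF gT -> X -> ZF gT) : Prop := forall g, loc_const (a g).

Definition cont_orbit_equiv (gT : finGroupType) (X : topologicalType)
  (alpha beta : ZF gT -> X -> X) : Prop :=
  exists (phi psi : X -> X) (a b : ZF gT -> X -> ZF gT),
    [/\ continuous phi, continuous psi, cancel phi psi & cancel psi phi] /\
    [/\ cocycle_cont a, cocycle_cont b,
        forall g x, phi (alpha g x) = beta (a g x) (phi x)
      & forall h y, psi (beta h y) = alpha (b h y) (psi y)].

Definition zf_aut (gT : finGroupType) (tau : ZF gT -> ZF gT) : Prop :=
  bijective tau /\ forall g h, tau (zf_mul g h) = zf_mul (tau g) (tau h).

Definition conjugate_actions (gT : finGroupType) (X : topologicalType)
  (alpha beta : ZF gT -> X -> X) : Prop :=
  exists (phi psi : X -> X) (tau : ZF gT -> ZF gT),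
    [/\ continuous phi, continuous psi, cancel phi psi & cancel psi phi] /\
    [/\ zf_aut tau
      & forall g x, phi (alpha g x) = beta (tau g) (phi x)].

(* Main.v *)
Require Import Defs.
From HB Require Import structures.
From mathcomp Require Import all_boot all_order all_algebra all_fingroup all_solvable.
From mathcomp Require Import all_classical all_reals all_analysis.
Set Implicit Arguments. Unset Strict Implicit. Unset Printing Implicit Defensive.
Import Order.TTheory GRing.Theory Num.Theory.
Local Open Scope classical_set_scope.
Local Open Scope ring_scope.

Definition pw (j : nat) : int := 2 ^+ j.
Definition V (j : nat) (y : cantor_space) : int := \sum_(i < j) ((y i : nat)%:Z * pw i).

Lemma pw_gt0 j : 0 < pw j. Proof. by rewrite exprn_gt0. Qed.
Lemma pwS j : pw j.+1 = pw j * 2. Proof. by rewrite /pw exprSr. Qed.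
Lemma pwD i k : pw (i + k) = pw k * pw i. Proof. by rewrite /pw exprD mulrC. Qed.

Lemma VS j y : V j.+1 y = V j y + (y j : nat)%:Z * pw j.
Proof. by rewrite /V big_ord_recr. Qed.
Lemma V0 y : V 0 y = 0. Proof. by rewrite /V big_ord0. Qed.

Lemma V_bnd j y : 0 <= V j y < pw j.
Proof.
elim: j => [|j /andP[h1 h2]]; first by rewrite V0 /pw expr0.
rewrite VS pwS; case: (y j) => /=.
  by rewrite mul1r addr_ge0 ?(ltW (pw_gt0 j)) //= mulr2n mulrDr mulr1 ltrD2r.
rewrite mul0r addr0 h1 /=; apply: (lt_le_trans h2).
by rewrite ler_peMr ?(ltW (pw_gt0 j)) // ler1n.
Qed.

Lemma bitV i y : y i = (pw i <= V i.+1 y).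
Proof.
rewrite VS; have /andP[h1 h2] := V_bnd i y; case: (y i) => /=.
  by rewrite mul1r lerDr.
by rewrite mul0r addr0 leNgt h2.
Qed.

Lemma modz_dvdm (m d k : int) : modz (modz m (k * d)) d = modz m d.
Proof.
by rewrite {2}(divz_eq m (k * d)) mulrA modzMDl.
Qed.

Lemma V_mod i k y : V i y = (V (i + k) y %% pw i)%Z.
Proof.
elim: k => [|k IH]; first by rewrite addn0 modz_small // V_bnd.
rewrite addnS VS IH pwD mulrA.
by rewrite addrC modzMDl.
Qed.

Lemma V_ext y z : (forall j, V j y = V j z) -> y = z.
Proof. by move=> h; apply: funext => i; rewrite !bitV h. Qed.

Lemma V_cyl j y z : (forall i, (i < j)%N -> y i = z i) -> V j y = V j z.
Proof. by move=> h; apply: eq_bigr => i _; rewrite h. Qed.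

Lemma cyl_V j y z : V j y = V j z -> forall i, (i < j)%N -> y i = z i.
Proof.
move=> h i lij; rewrite !bitV.
by rewrite (V_mod _ (j - i.+1) y) (V_mod _ (j - i.+1) z) subnKC // h.
Qed.

Definition add (n : int) (y : cantor_space) : cantor_space :=
  fun i => (pw i <= modz (V i.+1 y + n) (pw i.+1)).

Lemma split2 (r a : int) : 0 < a -> 0 <= r < a * 2 ->
  r = modz r a + ((a <= r)%R : nat)%:Z * a.
Proof.
move=> a0 /andP[r0 ra]; case: leP => /= h.
  have -> : modz r a = modz (r - a) a by rewrite -(modzDr (r - a) a) subrK.
  rewrite mul1r modz_small ?subrK //.
  by rewrite subr_ge0 h /= ltrBlDr -[a in a + a]mulr1 -mulrDr.
by rewrite mul0r addr0 modz_small // r0.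
Qed.

Lemma V_add j n y : V j (add n y) = modz (V j y + n) (pw j).
Proof.
elim: j => [|j IH]; first by rewrite V0 /pw expr0 modz1.
rewrite VS IH.
set r := modz (V j.+1 y + n) (pw j.+1).
have e : modz (V j y + n) (pw j) = modz r (pw j).
  rewrite /r pwS mulrC modz_dvdm VS.
  have -> : V j y + (y j : nat)%:Z * pw j + n = (y j : nat)%:Z * pw j + (V j y + n).
    by rewrite addrAC addrC.
  by rewrite modzMDl.
rewrite e /add -/r [in RHS](@split2 r (pw j)) ?pw_gt0 //.
rewrite /r modz_ge0 ?gt_eqF ?pw_gt0 //= -pwS ltz_pmod // pw_gt0 //.
Qed.

Lemma add0 y : add 0 y = y.
Proof. by apply: V_ext => j; rewrite V_add addr0 modz_small // V_bnd. Qed.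

Lemma addA m n y : add m (add n y) = add (m + n) y.
Proof. by apply: V_ext => j; rewrite !V_add modzDml -addrA [n + m]addrC. Qed.

Definition cyl j (y : cantor_space) : set cantor_space := [set z | V j z = V j y].

Lemma V_le i j y z : (i <= j)%N -> V j z = V j y -> V i z = V i y.
Proof. by move=> lij h; rewrite (V_mod _ (j - i) y) (V_mod _ (j - i) z) subnKC // h. Qed.

Lemma cyl_nbhs j y : nbhs y (cyl j y).
Proof.
suff : nbhs y [set z : cantor_space | forall i, (i < j)%N -> z i = y i].
  by apply: filterS => z h; apply: V_cyl.
elim: j => [|j IH]; first by apply: filterS filterT.
have hj : nbhs y [set z : cantor_space | z j = y j].
  have := @proj_continuous nat (fun _ => bool) j y [set y j].
  by apply; apply: discrete_set1.
apply: filterS (filterI IH hj) => z [h1 h2] i; rewrite ltnS leq_eqVlt.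
by case/orP => [/eqP -> //|]; apply: h1.
Qed.

Lemma nbhs_cyl y N : nbhs y N -> exists j, cyl j y `<=` N.
Proof.
pose G := filter_from [set: nat] (fun j => cyl j y).
have FG : Filter G.
  apply: filter_from_filter; first by exists 0%N.
  move=> i j _ _; exists (maxn i j) => // z hz; split.
    by apply: (V_le (leq_maxl i j)).
  by apply: (V_le (leq_maxr i j)).
have : G --> (y : {ptws nat -> bool}).
  apply/pointwise_cvgP => t; apply/discrete_cvg.
  by exists t.+1 => // z hz; apply: (cyl_V hz).
by move=> /(_ N) h /h [j _ hj]; exists j.
Qed.

Lemma add_cont n : continuous (add n).
Proof.
move=> y; apply/pointwise_cvgP => t; apply/discrete_cvg.
apply: filterS (cyl_nbhs t.+1 y) => z hz.
by rewrite /add /= hz.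
Qed.

Lemma add_free n y : add n y = y -> n = 0.
Proof.
move=> h; have hj j : (pw j %| n)%Z.
  apply/dvdz_mod0P; have := congr1 (V j) h; rewrite V_add => h'.
  have : (V j y + n == V j y + 0 %[mod pw j])%Z.
    by apply/eqP; rewrite h' addr0 modz_small // V_bnd.
  by rewrite eqz_modDl mod0z => /eqP.
apply/eqP; apply: contraT => nz.
have := hj `|n|%N; rewrite dvdzE /pw abszX /= => /dvdn_leq.
rewrite absz_gt0 nz => /(_ isT); rewrite leqNgt ltn_expl //.
Qed.

Lemma add_hit j y z : V j (add (V j z - V j y) y) = V j z.
Proof. by rewrite V_add addrC subrK modz_small // V_bnd. Qed.

Lemma add_pw j y : V j (add (pw j) y) = V j y.
Proof. by rewrite V_add modzDr modz_small // V_bnd. Qed.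
Section CP.
Variable gT : finGroupType.
Implicit Types c : gT.

Definition cp c (n : int) : gT := (c ^+ absz (modz n #[c]%:Z))%g.

Lemma modz_absz (n : int) (p : nat) : (0 < p)%N -> (absz (modz n p))%:Z = modz n p.
Proof. by move=> p0; rewrite gez0_abs // modz_ge0 // lt0n_neq0 // ltz_nat. Qed.

Lemma cpD c m n : cp c (m + n) = (cp c m * cp c n)%g.
Proof.
rewrite /cp -expgD -[RHS]expg_mod_order; congr (_ ^+ _)%g.
have p0 := order_gt0 c.
apply/eqP; rewrite -eqz_nat -modz_nat PoszD !modz_absz //.
by rewrite modzDm.
Qed.

Lemma cp0 c : cp c 0 = 1%g.
Proof. by rewrite /cp mod0z. Qed.

Lemma cp1 n : cp 1%g n = 1%g.
Proof. by rewrite /cp expg1n. Qed.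

Lemma cpC c m n : (cp c m * cp c n = cp c n * cp c m)%g.
Proof. by rewrite -!cpD addrC. Qed.

Lemma cp_eq1 c n : cp c n = 1%g -> ((#[c]%g)%:Z %| n)%Z.
Proof.
move=> /eqP; rewrite /cp -order_dvdn => h.
have p0 := order_gt0 c.
have ha : (absz (modz n (#[c]%g)) < #[c]%g)%N.
  by rewrite -ltz_nat modz_absz // ltz_pmod // ltz_nat.
have a0 : absz (modz n (#[c]%g)) = 0%N.
  apply/eqP; apply: contraT; rewrite -lt0n => nz.
  by have := dvdn_leq nz h; rewrite leqNgt ha.
by apply/dvdz_mod0P; rewrite -modz_absz // a0.
Qed.
End CP.

Section Tau.
Variable gT : finGroupType.
Definition zpow (a : ZF gT) (n : nat) : ZF gT := (a.1 *+ n, (a.2 ^+ n)%g).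

Lemma zpowS a n : zpow a n.+1 = zf_mul a (zpow a n).
Proof. by rewrite /zpow /zf_mul mulrS expgS. Qed.

Lemma zpow0 a : zpow a 0 = zf_one gT.
Proof. by rewrite /zpow /zf_one mulr0n expg0. Qed.

Variable tau : ZF gT -> ZF gT.
Hypothesis ht : zf_aut tau.

Lemma tau_one : tau (zf_one gT) = zf_one gT.
Proof.
have := ht.2 (zf_one gT) (zf_one gT).
have -> : zf_mul (zf_one gT) (zf_one gT) = zf_one gT.
  by rewrite /zf_mul /zf_one /= addr0 mulg1.
case: (tau _) => t1 t2; rewrite /zf_mul /= => -[e1 e2].
have h1 : t1 + t1 = t1 + 0 by rewrite addr0.
have h2 : (t2 * t2 = t2 * 1)%g by rewrite mulg1.
have := congr1 (mulg t2^-1) h2; rewrite !mulKg => ->.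
by rewrite /zf_one (addrI _ h1).
Qed.

Lemma tau_zpow a n : tau (zpow a n) = zpow (tau a) n.
Proof.
elim: n => [|n IH]; first by rewrite !zpow0 tau_one.
by rewrite !zpowS ht.2 IH.
Qed.

Lemma tau_comm a b : zf_mul a b = zf_mul b a ->
  ((tau a).2 * (tau b).2 = (tau b).2 * (tau a).2)%g.
Proof. by move=> h; have := congr1 tau h; rewrite !ht.2 /zf_mul => -[]. Qed.

Lemma tau_tors f : (tau (0, f)).1 = 0.
Proof.
have := tau_zpow (0, f) #[f]%g.
have -> : zpow (0, f) #[f]%g = zf_one gT.
  by rewrite /zpow /zf_one /= mul0rn expg_order.
rewrite tau_one /zpow /zf_one => -[] /esym /eqP.
by rewrite mulrn_eq0 (gtn_eqF (order_gt0 f)) /= => /eqP.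
Qed.

Lemma tau_split w : tau w = zf_mul (tau (w.1, 1%g)) (tau (0, w.2)).
Proof. by rewrite -ht.2 /zf_mul /= addr0 mul1g -surjective_pairing. Qed.

Lemma tau_surj z : exists w, tau w = z.
Proof. by case: ht => -[g _ K] _; exists (g z); rewrite K. Qed.

Lemma tau_f0 : ('Z([set: gT]%SET) = 1)%g -> (tau (1, 1%g)).2 = 1%g.
Proof.
move=> Z1.
have : (tau (1, 1%g)).2 \in ('Z([set: gT]%SET))%g.
  apply/centerP; split; first by rewrite inE.
  move=> h _; have [w hw] := tau_surj (0, h).
  have -> : h = (tau w).2 by rewrite hw.
  rewrite (tau_split w) /zf_mul /=.
  have c1 := @tau_comm (1, 1%g) (w.1, 1%g).
  have c2 := @tau_comm (1, 1%g) (0, w.2).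
  rewrite /commute mulgA c1; last by rewrite /zf_mul /= mulg1 addrC.
  rewrite -mulgA c2 ?mulgA //.
  by rewrite /zf_mul /= mulg1 mul1g addr0 add0r.
by rewrite Z1 inE => /eqP.
Qed.

Lemma tau_e : absz (tau (1, 1%g)).1 = 1%N.
Proof.
set e := (tau (1, 1%g)).1.
suff [m hm] : exists m : int, e * m = 1.
  by have := congr1 absz hm; rewrite abszM /= => /eqP; rewrite muln_eq1 => /andP[/eqP].
have [w hw] := tau_surj (1, 1%g).
have := congr1 fst hw; rewrite tau_split /zf_mul /= tau_tors addr0.
have tn n : (tau (n%:Z, 1%g)).1 = e *+ n.
  have -> : (n%:Z, 1%g) = zpow (1, 1%g) n by rewrite /zpow /= expg1n natz.
  by rewrite tau_zpow.
case: w.1 => n.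
  by rewrite tn => h; exists n%:R; rewrite mulr_natr.
have h0 : zf_mul (Negz n, 1%g) (n.+1%:Z, 1%g) = zf_one gT.
  by rewrite /zf_mul /zf_one /= NegzE addNr mulg1.
have := congr1 tau h0; rewrite ht.2 tau_one /zf_mul /zf_one => -[+ _].
rewrite tn.
move=> h1 h2; exists (- n.+1%:R); rewrite mulrN mulr_natr.
by rewrite -h2; apply/eqP; rewrite eq_sym -subr_eq0 opprK h1.
Qed.

Lemma tau_nat n : tau (n%:Z, 1%g) = ((tau (1, 1%g)).1 *+ n, ((tau (1%R, 1%g)).2 ^+ n)%g).
Proof.
have -> : (n%:Z, 1%g) = zpow (1, 1%g) n by rewrite /zpow /= expg1n natz.
by rewrite tau_zpow.
Qed.
End Tau.
Section XSpace.
Variable gT : finGroupType.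
Definition X : topologicalType := (cantor_space * discrete_topology gT)%type.

Lemma nbhsX (x : X) (A : set cantor_space) (B : set (discrete_topology gT)) :
  nbhs x.1 A -> nbhs x.2 B -> nbhs x (A `*` B).
Proof. by move=> hA hB; exists (A, B). Qed.

Lemma nbhsXP (x : X) (N : set X) : nbhs x N ->
  exists A B, [/\ nbhs x.1 A, nbhs x.2 B & A `*` B `<=` N].
Proof. by case=> -[A B] /= [hA hB] hN; exists A, B. Qed.

Lemma nbhs_snd (x : X) : nbhs x [set z : X | z.2 = x.2].
Proof.
apply: filterS (nbhsX filterT (discrete_set1 x.2)) => z [] _ //.
Qed.

Lemma X_compact : compact [set: X].
Proof.
rewrite -setXTT; apply: compact_setX; first exact: cantor_space_compact.
by apply: finite_compact; exact: (@finite_finset gT).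
Qed.

Lemma X_hausdorff : hausdorff_space X.
Proof.
move=> p q hpq.
have h1 : p.1 = q.1.
  apply: cantor_space_hausdorff => A B hA hB.
  have [z [[hz1 _] [hz2 _]]] := hpq _ _ (nbhsX hA (@filterT _ _ _)) (nbhsX hB (@filterT _ _ _)).
  by exists z.1.
have h2 : p.2 = q.2.
  apply: (@discrete_hausdorff (discrete_topology gT)) => A B hA hB.
  have [z [[_ hz1] [_ hz2]]] := hpq _ _ (nbhsX (@filterT _ _ _) hA) (nbhsX (@filterT _ _ _) hB).
  by exists z.2.
by case: p q h1 h2 hpq => ? ? [? ?] /= -> ->.
Qed.

Definition alphac (c : gT) (g : ZF gT) (x : X) : X :=
  (add g.1 x.1, (g.2 * (x.2 : gT) * cp c g.1)%g).

Lemma act_ok c : cont_action (alphac c).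
Proof.
split.
- by case=> y k; rewrite /alphac /zf_one /= add0 cp0 mul1g mulg1.
- case=> m f [n h] [y k]; rewrite /alphac /zf_mul /= addA.
  by rewrite addrC cpD !mulgA.
- move=> g x N /nbhsXP [A [B [hA hB hAB]]].
  have hA' := add_cont hA.
  apply: filterS (nbhsX hA' (discrete_set1 x.2)) => z [h1 h2].
  apply: hAB; split => //=; rewrite h2; exact: nbhs_singleton hB.
Qed.

Lemma act_min c : minimal_action (alphac c).
Proof.
move=> x; apply/seteqP; split => // z _ N /nbhsXP [A [B [hA hB hAB]]].
have [j hj] := nbhs_cyl hA.
pose n := V j z.1 - V j x.1.
pose f := (z.2 * ((x.2 : gT) * cp c n)^-1)%g.
exists (alphac c (n, f) x); split; first by exists (n, f).
apply: hAB; split => /=.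
  by apply: hj; rewrite /cyl /= add_hit.
by rewrite /f -mulgA mulgKV; exact: nbhs_singleton hB.
Qed.

Lemma act_free c : free_action (alphac c).
Proof.
case=> n f [y k]; rewrite /alphac /= => -[h1 h2].
have n0 := add_free h1; move: h2; rewrite n0 cp0 mulg1.
move=> /(congr1 (mulg^~ ((k : gT)^-1)%g)); rewrite mulgK mulgV => ->.
by rewrite /zf_one.
Qed.

Lemma coe c : cont_orbit_equiv (alphac 1) (alphac c).
Proof.
pose a (g : ZF gT) (x : X) : ZF gT :=
  (g.1, (g.2 * (x.2 : gT) * (cp c g.1)^-1 * (x.2 : gT)^-1)%g).
pose b (g : ZF gT) (x : X) : ZF gT :=
  (g.1, (g.2 * (x.2 : gT) * cp c g.1 * (x.2 : gT)^-1)%g).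
exists id, id, a, b; split; first by split => //; move=> x; exact: cvg_id.
split.
- by move=> g x; apply: filterS (nbhs_snd x) => z hz; rewrite /a hz.
- by move=> g x; apply: filterS (nbhs_snd x) => z hz; rewrite /b hz.
- by move=> g x; rewrite /alphac /a /= cp1 mulg1 !mulgKV.
- by move=> g x; rewrite /alphac /b /= cp1 mulg1 !mulgKV.
Qed.

Lemma X_infinite : infinite_set [set: X].
Proof.
pose y0 : cantor_space := fun _ => false.
pose f (n : nat) : X := (add n%:Z y0, 1%g).
have finj : injective f.
  move=> n m [] /(congr1 (add (- m%:Z))); rewrite !addA addNr add0 => /add_free.
  by move=> /eqP; rewrite addrC subr_eq0 => /eqP [].
move=> fin; apply: infinite_nat.
have := @finite_preimage _ _ [set: X] f (fun a b _ _ => @finj a b) fin.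
by rewrite preimage_setT.
Qed.

Lemma pwE j : pw j = (2 ^ j)%N%:Z.
Proof. by rewrite /pw -natz natrX. Qed.

Lemma nonconj c : prime #[c]%g -> #[c]%g != 2%N -> ('Z([set: gT]%SET) = 1)%g ->
  ~ conjugate_actions (alphac 1) (alphac c).
Proof.
move=> pc c2 Z1 [phi [psi [tau [[cphi _ _ _] [ht heq]]]]].
pose x : X := ((fun _ => false) : cantor_space, 1%g).
have hn : nbhs x (phi @^-1` (setT `*` [set (phi x).2])).
  exact: (cphi x _ (nbhsX (x := phi x) (@filterT _ _ _) (discrete_set1 (phi x).2))).
have [A [B [hA hB hAB]]] := nbhsXP hn; have [j hj] := nbhs_cyl hA.
have hin : (phi @^-1` (setT `*` [set (phi x).2])) (alphac 1 (pw j, 1%g) x).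
  apply: hAB; split; first by apply: hj; rewrite /cyl /= add_pw.
  by rewrite /= cp1 !mulg1; exact: nbhs_singleton hB.
move: hin; rewrite /preimage /= heq pwE (tau_nat ht) (tau_f0 ht Z1) expg1n.
rewrite /alphac /= mul1g => -[_] /(congr1 (mulg ((phi x).2 : gT)^-1)%g).
rewrite mulKg mulVg => /cp_eq1; rewrite dvdzE -mulr_natr natz abszM (tau_e ht).
rewrite mul1n absz_nat (Euclid_dvdX _ _ pc) dvdn_prime2 // => /andP[].
by rewrite (negPf c2).
Qed.
End XSpace.

Local Close Scope ring_scope.

Unset Implicit Arguments.

Theorem theorem1p1 (gT : finGroupType) :
  ([set: gT]%SET != 1)%g -> ('Z([set: gT]%SET) = 1)%g ->
  exists (X : topologicalType) (alpha alpha' : ZF gT -> X -> X),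
    [/\ compact [set: X], hausdorff_space X & infinite_set [set: X]] /\
    [/\ cont_action alpha /\ minimal_action alpha /\ free_action alpha,
        cont_action alpha' /\ minimal_action alpha' /\ free_action alpha',
        cont_orbit_equiv alpha alpha'
      & ~ conjugate_actions alpha alpha'].
Proof.
move=> G1 Z1.
have [q [pq q2 qG]] : exists q, [/\ prime q, q != 2%N & q %| #|[set: gT]%SET|].
  apply: contrapT => hn.
  have p2 : (2.-group [set: gT]%SET)%g.
    apply/pgroupP => p pp pd; rewrite inE; apply/negPn/negP => ne; apply: hn.
    by exists p; split.
  have := center_nil_eq1 (pgroup_nil p2); rewrite Z1 eqxx => /esym /eqP h.
  by rewrite h eqxx in G1.
have [c _ oc] := Cauchy pq qG.
exists (X gT), (alphac 1), (alphac c); split.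
  by split; [exact: X_compact | exact: X_hausdorff | exact: X_infinite].
split.
- by split; [exact: act_ok | split; [exact: act_min | exact: act_free]].
- by split; [exact: act_ok | split; [exact: act_min | exact: act_free]].
- exact: coe.
- by apply: nonconj => //; rewrite oc.
Qed.
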